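(* $$\max_{U_1,U_2\in\mathcal R}\ \langle 2|U_2\,\mathcal M_2(U_1|1\rangle\langle 1|U_1^\dagger)\,U_2^\dagger|2\rangle=\frac12 .$$
   Context: Basis of $\mathbb C^3$: $|1\rangle,|2\rangle,|3\rangle$ (standard basis). Spin-1 matrices in this basis: $J_y=\frac{1}{\sqrt2}\begin{pmatrix}0&-i&0\\ i&0&-i\\ 0&i&0\end{pmatrix}$, $J_z=\mathrm{diag}(1,0,-1)$. Define $Z(\alpha,\beta,\gamma)=e^{-i\alpha J_z}e^{-i\beta J_y}e^{-i\gamma J_z}$. Let $\mathcal R=\{Z(\alpha,\beta,\gamma):\alpha,\beta,\gamma\in\mathbb R\}\subset U(3)$. For $j\in\{1,2\}$ let $P_j=|j\rangle\langle j|$ and $\mathcal M_j(\rho)=P_j\rho P_j+(\mathbb I-P_j)\rho(\mathbb I-P_j)$ (non-selective measurement of the population of $|j\rangle$). *)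

(* Defs.v *)
From HB Require Import structures.
From mathcomp Require Import all_boot all_order all_algebra.
From mathcomp Require Import all_classical all_reals all_analysis.
From mathcomp Require Import complex.
Set Implicit Arguments. Unset Strict Implicit. Unset Printing Implicit Defensive.
Import Order.TTheory GRing.Theory Num.Theory numFieldNormedType.Exports.
Local Open Scope ring_scope.
Local Open Scope complex_scope.

Section Defs.
Variable R : realType.
Local Notation C := R[i].

Definition expm_partial (A : 'M[C]_3) (n : nat) : 'M[C]_3 :=
  \sum_(k < n) ((k`!)%:R)^-1 *: A ^+ k.

Definition expm (A : 'M[C]_3) : 'M[C]_3 :=
  \matrix_(i < 3, j < 3)
    Complex (limn (fun n => complex.Re (expm_partial A n i j)))
            (limn (fun n => complex.Im (expm_partial A n i j))).

(* Spin-1 matrices in the standard basis |1>,|2>,|3> (indices 0,1,2). *)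
Definition Jy : 'M[C]_3 :=
  ((Num.sqrt 2)^-1)%:C *:
  \matrix_(i < 3, j < 3)
    (if (i == 0 :> nat) && (j == 1 :> nat) then - 'i
     else if (i == 1 :> nat) && (j == 0 :> nat) then 'i
     else if (i == 1 :> nat) && (j == 2 :> nat) then - 'i
     else if (i == 2 :> nat) && (j == 1 :> nat) then 'i
     else 0).

Definition Jz : 'M[C]_3 :=
  \matrix_(i < 3, j < 3)
    (if (i == j) then (if i == 0 :> nat then 1 else if i == 1 :> nat then 0 else -1)
     else 0).

Definition Zrot (a b c : R) : 'M[C]_3 :=
  expm ((- ('i * a%:C)) *: Jz) *m expm ((- ('i * b%:C)) *: Jy)
    *m expm ((- ('i * c%:C)) *: Jz).

Definition in_rot (U : 'M[C]_3) : Prop := exists a b c : R, U = Zrot a b c.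

Definition adj (U : 'M[C]_3) : 'M[C]_3 := map_mx (@conjc R) (trmx U).

(* P_j = |j><j|  (j : 'I_3, i.e. |j+1> in the paper's labelling). *)
Definition proj (j : 'I_3) : 'M[C]_3 := delta_mx j j.

(* Non-selective measurement of the population of |j>. *)
Definition meas (j : 'I_3) (rho : 'M[C]_3) : 'M[C]_3 :=
  proj j *m rho *m proj j + (1 - proj j) *m rho *m (1 - proj j).

Definition idx1 : 'I_3 := @Ordinal 3 0 isT.
Definition idx2 : 'I_3 := @Ordinal 3 1 isT.

Definition fidelity_val (U1 U2 : 'M[C]_3) : C :=
  (U2 *m meas idx2 (U1 *m proj idx1 *m adj U1) *m adj U2) idx2 idx2.

End Defs.

(* Main.v *)
Require Import Defs.
From HB Require Import structures.
From mathcomp Require Import all_boot all_order all_algebra.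
From mathcomp Require Import all_classical all_reals all_analysis.
From mathcomp Require Import complex.
From mathcomp Require Import ring lra.
Import Order.TTheory GRing.Theory Num.Theory numFieldNormedType.Exports.
Local Open Scope ring_scope.
Local Open Scope complex_scope.
Section H.
Variable R : realType.
Local Notation C := R[i].
Local Open Scope classical_set_scope.

Lemma cvg_c (t : R) : series (cos_coeff t) @ \oo --> cos t.
Proof. rewrite cos.unlock; exact: is_cvg_series_cos_coeff. Qed.
Lemma cvg_s (t : R) : series (sin_coeff t) @ \oo --> sin t.
Proof. rewrite sin.unlock; exact: is_cvg_series_sin_coeff. Qed.

Lemma lim_ev t (f : nat -> R) A B D :
 (forall n, (0 < n)%N -> f n = A + (series (cos_coeff t) n - 1) * B + series (sin_coeff t) n * D) ->
 limn f = A + (cos t - 1) * B + sin t * D.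
Proof.
move=> hf; apply: cvg_lim => //.
have hg : (fun n => A + (series (cos_coeff t) n - 1) * B + series (sin_coeff t) n * D) @ \oo
   --> (A + (cos t - 1) * B + sin t * D).
  apply: cvgD; last by apply: cvgM; [exact: cvg_s | exact: cvg_cst].
  apply: cvgD; first exact: cvg_cst.
  apply: cvgM; last exact: cvg_cst; apply: cvgB; [exact: cvg_c | exact: cvg_cst].
apply: cvg_trans hg; apply: near_eq_cvg; near=> n; rewrite hf //.
near: n; by exists 1%N.
Unshelve. all: by end_near.
Qed.
Local Close Scope classical_set_scope.
Lemma ReD (z w : C) : complex.Re (z + w) = complex.Re z + complex.Re w. Proof. by case: z; case: w. Qed.
Lemma ImD (z w : C) : complex.Im (z + w) = complex.Im z + complex.Im w. Proof. by case: z; case: w. Qed.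
Lemma ReN (z : C) : complex.Re (- z) = - complex.Re z. Proof. by case: z. Qed.
Lemma ImN (z : C) : complex.Im (- z) = - complex.Im z. Proof. by case: z. Qed.
Lemma ReM (z w : C) : complex.Re (z * w) = complex.Re z * complex.Re w - complex.Im z * complex.Im w. Proof. by case: z; case: w. Qed.
Lemma ImM (z w : C) : complex.Im (z * w) = complex.Re z * complex.Im w + complex.Im z * complex.Re w. Proof. case: z => a b; case: w => c d /=; ring. Qed.
Lemma ReC (x : R) : complex.Re (x%:C) = x. Proof. by []. Qed.
Lemma ImC (x : R) : complex.Im (x%:C) = 0. Proof. by []. Qed.
Lemma Re1 : complex.Re (1 : C) = 1. Proof. by []. Qed.
Lemma Im1 : complex.Im (1 : C) = 0. Proof. by []. Qed.
Lemma Re0 : complex.Re (0 : C) = 0. Proof. by []. Qed.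
Lemma Im0 : complex.Im (0 : C) = 0. Proof. by []. Qed.
Lemma Rei : complex.Re ('i : C) = 0. Proof. by []. Qed.
Lemma Imi : complex.Im ('i : C) = 1. Proof. by []. Qed.
Lemma ReJ (z : C) : complex.Re (z^*) = complex.Re z. Proof. by case: z. Qed.
Lemma ImJ (z : C) : complex.Im (z^*) = - complex.Im z. Proof. by case: z. Qed.
Lemma ReB (z w : C) : complex.Re (z - w) = complex.Re z - complex.Re w. Proof. by rewrite ReD ReN. Qed.
Lemma ImB (z w : C) : complex.Im (z - w) = complex.Im z - complex.Im w. Proof. by rewrite ImD ImN. Qed.
Lemma ReIm (z : C) : z = Complex (complex.Re z) (complex.Im z). Proof. by case: z. Qed.
Lemma eqC (z w : C) : complex.Re z = complex.Re w -> complex.Im z = complex.Im w -> z = w.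
Proof. by case: z; case: w => /= ? ? ? ? -> ->. Qed.
Definition ReIm_simp := (ReD, ImD, ReN, ImN, ReM, ImM, ReC, ImC, Re1, Im1, Re0, Im0, Rei, Imi, ReJ, ImJ).

Lemma wz : Algebra.hasZero.zero (Algebra.BaseAddUMagma.class R) = 0 :> R. Proof. by []. Qed.
Lemma negi_pow n : (- 'i : C)^+n =
  ((~~ odd n)%:R * (-1)^+n./2)%:C - 'i * ((odd n)%:R * (-1)^+n.-1./2)%:C.
Proof.
have sq : (- 'i : C)^+2 = -1 by rewrite sqrrN sqr_i.
move hm : n./2 => m.
have hn : n = (m.*2 + odd n)%N by rewrite -hm addnC odd_double_half.
case ho: (odd n); rewrite hn ho.
- rewrite addn1 /= doubleK exprS -muln2 mulnC exprM sq.
  have -> : (-1 : C)^+m = ((-1)^+m)%:C by rewrite rmorphXn rmorphN1.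
  apply: eqC; rewrite !ReIm_simp; ring.
- rewrite addn0 -muln2 mulnC exprM sq /=.
  have -> : (-1 : C)^+m = ((-1)^+m)%:C by rewrite rmorphXn rmorphN1.
  apply: eqC; rewrite !ReIm_simp; ring.
Qed.
Lemma coefE t n : ((n`!)%:R : C)^-1 * (-('i * t%:C))^+n
   = (cos_coeff t n)%:C - 'i * (sin_coeff t n)%:C.
Proof.
have -> : ((n`!)%:R : C)^-1 = ((n`!%:R : R)^-1)%:C by rewrite fmorphV rmorph_nat.
rewrite -mulNr exprMn negi_pow -rmorphXn /cos_coeff /sin_coeff /=.
apply: eqC; rewrite !ReIm_simp /exprz ?wz; ring.
Qed.
Lemma powJ (J : 'M[C]_3) : J^+3 = J -> forall m, J^+(m.*2.+1) = J /\ J^+(m.*2.+2) = J^+2.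
Proof.
move=> hJ; elim=> [|m [h1 h2]]; first by rewrite expr1.
rewrite doubleS; split.
- rewrite (_ : m.*2.+3 = (m.*2.+1 + 2)%N); last by rewrite addn2.
  by rewrite exprD h1 -exprS hJ.
- rewrite (_ : m.*2.+4 = (m.*2.+2 + 2)%N); last by rewrite addn2.
  by rewrite exprD h2 -exprD (_ : (2 + 2 = 3 + 1)%N) // exprD hJ expr1 expr2.
Qed.

Lemma c0 (t : R) : cos_coeff t 0 = 1.
Proof. by rewrite /cos_coeff /= expr0z expr0 !mul1r invr1. Qed.
Lemma s0 (t : R) : sin_coeff t 0 = 0.
Proof. by rewrite /sin_coeff /= !mul0r. Qed.
Lemma ser0 (u : R ^nat) : series u 0 = 0.
Proof. by rewrite /series /= big_geq. Qed.
Lemma codd (t : R) n : odd n -> cos_coeff t n = 0.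
Proof. by move=> h; rewrite /cos_coeff /= h !mul0r. Qed.
Lemma seven (t : R) n : ~~ odd n -> sin_coeff t n = 0.
Proof. by move=> h; rewrite /sin_coeff /= (negbTE h) !mul0r. Qed.
Lemma rc0 : (0:R)%:C = 0 :> C. Proof. by []. Qed.
Lemma rcD (x y : R) : (x + y)%:C = x%:C + y%:C :> C.
Proof. by apply: eqC; rewrite !ReIm_simp ?addr0. Qed.
Lemma rcB (x y : R) : (x - y)%:C = x%:C - y%:C :> C.
Proof. by apply: eqC; rewrite !ReIm_simp ?subr0. Qed.
Lemma partialE (J : 'M[C]_3) (hJ : J^+3 = J) t n : (0 < n)%N ->
  expm_partial ((-('i*t%:C)) *: J) n =
  1 + ((series (cos_coeff t) n - 1)%:C) *: J^+2 - ('i * (series (sin_coeff t) n)%:C) *: J.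
Proof.
elim: n => [//|n IH] _.
rewrite /expm_partial big_ord_recr /= -/(expm_partial _ n) !seriesSr.
rewrite exprZn scalerA coefE.
case: n IH => [|n] IH.
  rewrite /expm_partial big_ord0 !ser0 c0 s0 !add0r subrr !rmorph0 mulr0 !scale0r expr0 subr0 rmorph1 scale1r.
  by rewrite addr0 subr0.
rewrite IH //.
have hn := odd_double_half n.+1.
case ho: (odd n.+1); rewrite ho in hn.
- have -> : J^+n.+1 = J by rewrite -hn add1n (powJ J hJ _).1.
  rewrite codd ?ho //.
  rewrite addr0 (rcD (series (sin_coeff t) _)) mulrDr scalerDl rc0 scale0r add0r scaleNr scalerDl.
  by rewrite opprD addrA.
- move: hn; case: (n.+1)./2 => [|k] hn; first by rewrite add0n in hn.
  have -> : J^+n.+1 = J^+2 by rewrite -hn add0n doubleS (powJ J hJ _).2.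
  rewrite seven ?ho //.
  rewrite addr0 rc0 mulr0 subr0 (addrAC (series _ _)) (rcD (series (cos_coeff t) _ - 1)) scalerDl.
  by rewrite [LHS]addrAC !addrA.
Qed.
Lemma expmE (J : 'M[C]_3) (hJ : J^+3 = J) t :
  expm ((-('i*t%:C)) *: J) = 1 + ((cos t - 1)%:C) *: J^+2 - ('i * (sin t)%:C) *: J.
Proof.
apply/matrixP => i j; rewrite [LHS]mxE.
have hp := partialE J hJ t.
set J2 := J^+2 in hp *; set I := (1 : 'M[C]_3) in hp *.
apply: eqC => /=.
- rewrite (@lim_ev t _ (complex.Re (I i j)) (complex.Re (J2 i j)) (complex.Im (J i j))).
  + rewrite !mxE !ReIm_simp ?wz; ring.
  + move=> n n0; rewrite hp // !mxE !ReIm_simp ?wz; ring.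
- rewrite (@lim_ev t _ (complex.Im (I i j)) (complex.Im (J2 i j)) (- complex.Re (J i j))).
  + rewrite !mxE !ReIm_simp ?wz; ring.
  + move=> n n0; rewrite hp // !mxE !ReIm_simp ?wz; ring.
Qed.
Definition o0 : 'I_3 := @Ordinal 3 0 isT.
Definition o1 : 'I_3 := @Ordinal 3 1 isT.
Definition o2 : 'I_3 := @Ordinal 3 2 isT.
Lemma ord3P (i : 'I_3) : i = o0 \/ i = o1 \/ i = o2.
Proof.
case: i => [[|[|[|m]]] h]; [left|right;left|right;right|by []]; exact: val_inj.
Qed.
Lemma sum3 (F : 'I_3 -> C) : \sum_(k < 3) F k = F o0 + F o1 + F o2.
Proof.
rewrite !big_ord_recl big_ord0 addr0 addrA.
by congr (F _ + F _ + F _); apply: val_inj.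
Qed.
Lemma mulE (A B : 'M[C]_3) i j : (A *m B) i j = A i o0 * B o0 j + A i o1 * B o1 j + A i o2 * B o2 j.
Proof. by rewrite mxE sum3. Qed.
Lemma cube (J : 'M[C]_3) : J^+3 = J *m J *m J.
Proof. by rewrite !exprS expr0 mulr1 !mulmxE mulrA. Qed.

Lemma Jz3 : (Jz R)^+3 = Jz R.
Proof.
rewrite cube; apply/matrixP => i j.
case: (ord3P i) => [->|[->|->]]; case: (ord3P j) => [->|[->|->]];
  rewrite !mulE !mxE /=; apply: eqC; rewrite !ReIm_simp ?wz; ring.
Qed.
End H.

Section H2.
Variable R : realType.
Local Notation C := R[i].
Local Notation r := ((Num.sqrt (2:R))^-1).
Lemma Jy3 : (Jy R)^+3 = Jy R.
Proof.
rewrite /Jy; set c := (_)%:C; set M := \matrix_(i < 3, j < 3) _.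
have hM : M^+3 = M + M.
  rewrite cube; apply/matrixP => i j.
  case: (ord3P i) => [->|[->|->]]; case: (ord3P j) => [->|[->|->]];
  rewrite !mulE !mxE /=; apply: eqC; rewrite !ReIm_simp ?wz; ring.
rewrite exprZn hM scalerDr -scalerDl.
congr (_ *: _).
rewrite /c -rmorphXn -rcD; congr (_%:C).
have r2 : (Num.sqrt (2:R))^-1 ^+ 2 = 2^-1 by rewrite exprVn sqr_sqrtr.
rewrite exprS r2; field.
by apply: lt0r_neq0; rewrite sqrtr_gt0 ltr0n.
Qed.
Definition dz (a : R) (j : 'I_3) : C :=
  if j == o0 then Complex (cos a) (- sin a) else if j == o1 then 1 else Complex (cos a) (sin a).

Lemma DzE a i j : expm ((-('i*a%:C)) *: Jz R) i j = if i == j then dz a i else 0.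
Proof.
rewrite expmE; last exact: Jz3.
rewrite expr2 -mulmxE.
case: (ord3P i) => [->|[->|->]]; case: (ord3P j) => [->|[->|->]];
  rewrite !mxE !sum3 !mxE /= /dz /=; apply: eqC; rewrite !ReIm_simp /= ?wz; ring.
Qed.
Definition Ym (b : R) := expm ((-('i*b%:C)) *: Jy R).
Ltac yt := rewrite /Ym expmE; [|exact: Jy3]; rewrite expr2 -mulmxE !mxE !sum3 !mxE /=;
  apply: eqC; rewrite !ReIm_simp /= ?wz; ring.
Lemma Y00 b : Ym b o0 o0 = (1 + (cos b - 1) * r^+2)%:C. Proof. yt. Qed.
Lemma Y10 b : Ym b o1 o0 = (r * sin b)%:C. Proof. yt. Qed.
Lemma Y20 b : Ym b o2 o0 = (-((cos b - 1) * r^+2))%:C. Proof. yt. Qed.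
Lemma Y11 b : Ym b o1 o1 = (1 + (cos b - 1) * (2 * r^+2))%:C. Proof. yt. Qed.
Lemma Y12 b : Ym b o1 o2 = (-(r * sin b))%:C. Proof. yt. Qed.
End H2.

Arguments dz {R}. Arguments Ym {R}.
Section H3.
Variable R : realType.
Local Notation C := R[i].
Local Notation r := ((Num.sqrt (2:R))^-1).

Lemma mul_diagr (A D : 'M[C]_3) j k : (forall i m, i != m -> D i m = 0) ->
  (A *m D) j k = A j k * D k k.
Proof.
move=> hD; rewrite mxE (bigD1 k) //= big1 ?addr0 // => m hm.
by rewrite hD ?mulr0.
Qed.
Lemma mul_diagl (D A : 'M[C]_3) j k : (forall i m, i != m -> D i m = 0) ->
  (D *m A) j k = D j j * A j k.
Proof.
move=> hD; rewrite mxE (bigD1 j) //= big1 ?addr0 // => m hm.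
by rewrite hD ?mul0r // eq_sym.
Qed.
Lemma Doff (a : R) i m : i != m -> expm ((-('i*a%:C)) *: Jz R) i m = 0.
Proof. by move=> h; rewrite DzE (negbTE h). Qed.
Lemma Zent (a b c : R) j k : Zrot a b c j k = dz a j * Ym b j k * dz c k.
Proof.
rewrite /Zrot [LHS]mul_diagr; last exact: Doff.
rewrite [X in X * _ = _]mul_diagl; last exact: Doff.
by congr (_ * _ * _); rewrite DzE eqxx.
Qed.
Lemma conjD (x y : C) : (x + y)^* = x^* + y^*.
Proof. apply: eqC; rewrite !ReIm_simp; ring. Qed.
Lemma conjM (x y : C) : (x * y)^* = x^* * y^*.
Proof. apply: eqC; rewrite !ReIm_simp; ring. Qed.

Lemma rhoE (U : 'M[C]_3) j k : (U *m Defs.proj R idx1 *m Defs.adj U) j k = U j o0 * (U k o0)^*.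
Proof.
rewrite /Defs.proj !(mxE, sum3) /=.
ring.
Qed.
Lemma measE (rho : 'M[C]_3) j k :
  Defs.meas idx2 rho j k = if (j == o1) == (k == o1) then rho j k else 0.
Proof.
case: (ord3P j) => [->|[->|->]]; case: (ord3P k) => [->|[->|->]];
  rewrite /Defs.meas /Defs.proj !(mxE, sum3) /=; ring.
Qed.

End H3.

Section H4.
Variable R : realType.
Local Notation C := R[i].
Local Notation r := ((Num.sqrt (2:R))^-1).
Definition Nc (z : C) := z * z^*.
Lemma outerE (U M : 'M[C]_3) : (U *m M *m Defs.adj U) o1 o1 =
  \sum_(l < 3) \sum_(m < 3) U o1 l * M l m * (U o1 m)^*.
Proof.
rewrite mxE exchange_big /=; apply: eq_bigr => m _.
rewrite /Defs.adj !mxE big_distrl /=; apply: eq_bigr => l _; by [].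
Qed.
Lemma fidE (U1 U2 : 'M[C]_3) : fidelity_val U1 U2 =
  Nc (U1 o1 o0) * Nc (U2 o1 o1) + Nc (U2 o1 o0 * U1 o0 o0 + U2 o1 o2 * U1 o2 o0).
Proof.
rewrite /fidelity_val outerE !sum3 !measE !rhoE /=.
by rewrite /Nc (rmorphD (@conjc _)) !(rmorphM (@conjc _)); ring.
Qed.
Lemma r2 : r^+2 = 2^-1.
Proof. by rewrite exprVn sqr_sqrtr. Qed.
Lemma Y00c (b : R) : Ym b o0 o0 = ((1 + cos b) / 2)%:C.
Proof. rewrite Y00 r2; congr (_%:C); by field. Qed.
Lemma Y20c (b : R) : Ym b o2 o0 = ((1 - cos b) / 2)%:C.
Proof. rewrite Y20 r2; congr (_%:C); by field. Qed.
Lemma Y11c (b : R) : Ym b o1 o1 = (cos b)%:C.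
Proof. rewrite Y11 r2; congr (_%:C); by field. Qed.
Definition PP (a c' : R) := cos c' * cos a - sin c' * sin a.
Definition QQ (a c' : R) := cos c' * sin a + sin c' * cos a.
End H4.

Arguments PP {R}. Arguments QQ {R}.
Section H5.
Variable R : realType.
Local Notation C := R[i].
Local Notation r := ((Num.sqrt (2:R))^-1).
Lemma fid_gen (U1 U2 : 'M[C]_3) v0 v1 v2 w0 w1 w2 :
  U1 o0 o0 = v0 -> U1 o1 o0 = v1 -> U1 o2 o0 = v2 ->
  U2 o1 o0 = w0 -> U2 o1 o1 = w1 -> U2 o1 o2 = w2 ->
  fidelity_val U1 U2 = Nc R v1 * Nc R w1 + Nc R (w0 * v0 + w2 * v2).
Proof. by move=> <- <- <- <- <- <-; exact: fidE. Qed.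
Lemma ReK (x y : R) : complex.Re (Complex x y) = x. Proof. by []. Qed.
Lemma ImK (x y : R) : complex.Im (Complex x y) = y. Proof. by []. Qed.
Lemma NcE (z : C) : Nc R z = (complex.Re z ^+ 2 + complex.Im z ^+ 2)%:C.
Proof. rewrite /Nc; apply: eqC; rewrite !ReIm_simp; ring. Qed.
Lemma fidZ (a b c a' b' c' : R) : fidelity_val (Zrot a b c) (Zrot a' b' c') =
  (r^+2 * sin b ^+ 2 * (cos c ^+ 2 + sin c ^+ 2) * cos b' ^+ 2 +
   r^+2 * sin b' ^+ 2 * (cos c ^+ 2 + sin c ^+ 2) * ((PP a c' * cos b) ^+ 2 + QQ a c' ^+ 2))%:C.
Proof.
have e1 : Zrot a b c o0 o0 = dz a o0 * ((1 + cos b)/2)%:C * dz c o0 by rewrite Zent Y00c.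
have e2 : Zrot a b c o1 o0 = dz a o1 * (r * sin b)%:C * dz c o0 by rewrite Zent Y10.
have e3 : Zrot a b c o2 o0 = dz a o2 * ((1 - cos b)/2)%:C * dz c o0 by rewrite Zent Y20c.
have e4 : Zrot a' b' c' o1 o0 = dz a' o1 * (r * sin b')%:C * dz c' o0 by rewrite Zent Y10.
have e5 : Zrot a' b' c' o1 o1 = dz a' o1 * (cos b')%:C * dz c' o1 by rewrite Zent Y11c.
have e6 : Zrot a' b' c' o1 o2 = dz a' o1 * (- (r * sin b'))%:C * dz c' o2 by rewrite Zent Y12.
rewrite (fid_gen _ _ _ _ _ _ _ _ e1 e2 e3 e4 e5 e6) /dz /= /PP /QQ !NcE.
apply: eqC; rewrite !(ReIm_simp, ReK, ImK) ?wz.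
all: by field.
Qed.
End H5.

Theorem theorem3 (R : realType) :
  (exists U1 U2 : 'M[R[i]]_3,
      in_rot U1 /\ in_rot U2 /\ fidelity_val U1 U2 = (2%:R)^-1) /\
  (forall U1 U2 : 'M[R[i]]_3,
      in_rot U1 -> in_rot U2 -> fidelity_val U1 U2 <= (2%:R)^-1).
Proof.
have h2 : ((2%:R)^-1 : R[i]) = ((2%:R)^-1 : R)%:C by rewrite fmorphV rmorph_nat.
split.
- exists (Zrot 0 (pi/2) 0), (Zrot 0 0 0); split; first by exists 0, (pi/2), 0.
  split; first by exists 0, 0, 0.
  rewrite fidZ h2 cos_pihalf sin_pihalf cos0 sin0 r2; congr (_%:C); ring.
- move=> U1 U2 [a [b [c ->]]] [a' [b' [c' ->]]]; rewrite fidZ h2 lecR cos2Dsin2 r2.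
  have PQ : PP a c' ^+ 2 + QQ a c' ^+ 2 = 1.
    transitivity ((cos c' ^+ 2 + sin c' ^+ 2) * (cos a ^+ 2 + sin a ^+ 2)).
      rewrite /PP /QQ; ring.
    by rewrite !cos2Dsin2 mulr1.
  have hb := cos2Dsin2 b; have hb' := cos2Dsin2 b'.
  have c0 := sqr_ge0 (cos b); have s0 := sqr_ge0 (sin b).
  have c0' := sqr_ge0 (cos b'); have s0' := sqr_ge0 (sin b').
  have p0 := sqr_ge0 (PP a c'); have q0 := sqr_ge0 (QQ a c').
  have h1 : sin b ^+ 2 * cos b' ^+ 2 <= cos b' ^+ 2 by nra.
  have h3 : (PP a c' * cos b) ^+ 2 + QQ a c' ^+ 2 <= 1 by rewrite exprMn; nra.
  have h4 : sin b' ^+ 2 * ((PP a c' * cos b) ^+ 2 + QQ a c' ^+ 2) <= sin b' ^+ 2 by nra.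
  nra.
Qed.
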